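(* Let $C,A^1,\dots,A^m\in\mathbb{S}^n$, $b\in\mathbb{R}^m$, with $\mathbf{P}$ and $\mathbf{D}$ feasible and $\mathbf{D}$ of singularity degree one, and let $0\le r<n$ be such that, writing $L(y)=C-\sum_iA^iy_i$ in blocks $L_{11}(y)\in\mathbb{S}^r$, $L_{12}(y)\in\mathbb{R}^{r\times(n-r)}$, $L_{22}(y)\in\mathbb{S}^{n-r}$: (a) for every $y$, $L(y)\succeq0$ iff $L_{12}(y)=0$, $L_{22}(y)=0$, $L_{11}(y)\succeq0$; (b) some $y$ has $L_{12}(y)=0$, $L_{22}(y)=0$, $L_{11}(y)\succ0$; (c) there is $X=\mathrm{diag}(0,X_{22})$ with $X_{22}\succ0$, $C\bullet X=0$, $A^i\bullet X=0$ for all $i$. Let $M>0$ be a constant such that for all $t\ge0$ and $y$, $L_{22}(y)+tI_{22}\succeq0$ implies $tMI_{22}\succeq L_{22}(y)+tI_{22}$, and set $K:=M(v(\mathbf{P})-v(\mathbf{D})+2)$. For $\alpha>0$, $t>0$ let $u_2(\alpha,t)$ be the optimal value (supremum) of $$\mathbf{RD2}(\alpha,t):\ \max_y\ b^Ty\ \text{ s.t. } L(y)+t\alpha I\succeq0,\ \ \|L_{12}(y)\|_F^2\le K\alpha .$$ Then for every $\alpha>0$, the limit $\bar u(\alpha):=\lim_{t\downarrow0}u_2(\alpha,t)$ exists and is finite.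
   Context: $\mathbf{P}$: $\min_X C\bullet X$ s.t. $A^i\bullet X=b_i$, $X\succeq0$; $\mathbf{D}$: $\max_y b^Ty$ s.t. $C-\sum_iA^iy_i\succeq0$; $v(\mathbf{P}),v(\mathbf{D})$ are their (finite) optimal values. $\mathbf{D}$ has singularity degree one if it is feasible and there exists a nonzero $X\succeq0$ with $C\bullet X=0$, $A^i\bullet X=0$ for all $i$, such that some $y$ has $C-\sum_iA^iy_i$ in the relative interior of $\{Z\succeq0: Z\bullet X=0\}$. $\|\cdot\|_F$ is the Frobenius norm; $I_{22}$ is the $(n-r)\times(n-r)$ identity. *)

(* Defs.v *)
From HB Require Import structures.
From mathcomp Require Import all_boot all_order all_algebra.
From mathcomp Require Import all_classical all_reals all_analysis.
Set Implicit Arguments. Unset Strict Implicit. Unset Printing Implicit Defensive.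
Import Order.TTheory GRing.Theory Num.Theory.
Import numFieldNormedType.Exports.
Local Open Scope classical_set_scope.
Local Open Scope ring_scope.

Section SDP.
Variable R : realType.

Definition symm n (X : 'M[R]_n) : Prop := X^T = X.

Definition psd n (X : 'M[R]_n) : Prop :=
  symm X /\ forall v : 'rV[R]_n, 0 <= (v *m X *m v^T) 0 0.

Definition pd n (X : 'M[R]_n) : Prop :=
  symm X /\ forall v : 'rV[R]_n, v != 0 -> 0 < (v *m X *m v^T) 0 0.

Definition inner p q (A X : 'M[R]_(p, q)) : R := \sum_i \sum_j A i j * X i j.

Definition frob2 p q (X : 'M[R]_(p, q)) : R := inner X X.

Definition dotv m (b y : 'I_m -> R) : R := \sum_i b i * y i.

Definition Lmap n m (C : 'M[R]_n) (A : 'I_m -> 'M[R]_n) (y : 'I_m -> R) : 'M[R]_n :=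
  C - \sum_i y i *: A i.

Definition P_feasible n m (A : 'I_m -> 'M[R]_n) (b : 'I_m -> R) (X : 'M[R]_n) : Prop :=
  psd X /\ forall i, inner (A i) X = b i.

Definition D_feasible n m (C : 'M[R]_n) (A : 'I_m -> 'M[R]_n) (y : 'I_m -> R) : Prop :=
  psd (Lmap C A y).

(* optimal values (finite under primal and dual feasibility, by weak duality) *)
Definition vP n m (C : 'M[R]_n) (A : 'I_m -> 'M[R]_n) (b : 'I_m -> R) : R :=
  inf [set inner C X | X in P_feasible A b].

Definition vD n m (C : 'M[R]_n) (A : 'I_m -> 'M[R]_n) (b : 'I_m -> R) : R :=
  sup [set dotv b y | y in D_feasible C A].

Definition aff_hull n (S : set 'M[R]_n) : set 'M[R]_n :=
  [set Z | exists (k : nat) (p : 'I_k -> 'M[R]_n) (lam : 'I_k -> R),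
      (forall i, S (p i)) /\ \sum_i lam i = 1 /\ Z = \sum_i lam i *: p i].

Definition relint n (S : set 'M[R]_n) : set 'M[R]_n :=
  [set Z | S Z /\ exists e : R, 0 < e /\
     forall W, aff_hull S W -> (forall i j, `|W i j - Z i j| < e) -> S W].

Definition face_of n (X : 'M[R]_n) : set 'M[R]_n :=
  [set Z | psd Z /\ inner Z X = 0].

Definition sing_deg_one n m (C : 'M[R]_n) (A : 'I_m -> 'M[R]_n) : Prop :=
  (exists y, D_feasible C A y) /\
  exists X : 'M[R]_n, X != 0 /\ psd X /\ inner C X = 0 /\
    (forall i, inner (A i) X = 0) /\
    exists y, relint (face_of X) (Lmap C A y).

Definition u2 r s m (C : 'M[R]_(r + s)) (A : 'I_m -> 'M[R]_(r + s)) (b : 'I_m -> R)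
    (K alpha t : R) : \bar R :=
  ereal_sup [set (dotv b y)%:E | y in
     [set y | psd (Lmap C A y + (t * alpha)%:M) /\
              frob2 (ursubmx (Lmap C A y)) <= K * alpha]].

End SDP.

(* Main.v *)
Require Import Defs.
From HB Require Import structures.
From mathcomp Require Import all_boot all_order all_algebra.
From mathcomp Require Import all_classical all_reals all_analysis.
From mathcomp Require Import ring lra.
Import Order.TTheory GRing.Theory Num.Theory.
Import numFieldNormedType.Exports.
Local Open Scope classical_set_scope.
Local Open Scope ring_scope.
Set Implicit Arguments. Unset Strict Implicit. Unset Printing Implicit Defensive.

Section Aux.
Variable R : realType.

Definition bil n (X : 'M[R]_n) (u w : 'rV[R]_n) : R := (u *m X *m w^T) 0 0.

Lemma bil_sym n (X : 'M[R]_n) u w : symm X -> bil X u w = bil X w u.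
Proof.
move=> sX; rewrite /bil.
have -> : w *m X *m u^T = (u *m X *m w^T)^T by rewrite !trmx_mul trmxK sX mulmxA.
by rewrite [RHS]mxE.
Qed.

Lemma bil_sub n (X : 'M[R]_n) (v e : 'rV[R]_n) (l : R) : symm X ->
  bil X (v - l *: e) (v - l *: e) = bil X v v - 2 * l * bil X v e + l ^+ 2 * bil X e e.
Proof.
move=> sX; rewrite /bil.
have -> : (v - l *: e)^T = v^T - l *: e^T by rewrite linearB linearZ.
rewrite !mulmxBl !mulmxBr -!scalemxAl -!scalemxAr.
have h := bil_sym v e sX; rewrite /bil in h; move: h.
set p1 := v *m X *m v^T; set p2 := v *m X *m e^T; set p3 := e *m X *m v^T.
set p4 := e *m X *m e^T => h; rewrite !mxE; rewrite !mxE in h; rewrite -h.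
ring.
Qed.


Definition ev n (i : 'I_n) : 'rV[R]_n := delta_mx 0 i.

Lemma bil_ev_r n (X : 'M[R]_n) v j : bil X v (ev j) = (v *m X) 0 j.
Proof. by rewrite /bil /ev trmx_delta -colE mxE. Qed.

Lemma bil_ev n (X : 'M[R]_n) i j : bil X (ev i) (ev j) = X i j.
Proof. by rewrite bil_ev_r /ev -rowE mxE. Qed.

Lemma psd_diag n (X : 'M[R]_n) i : psd X -> 0 <= X i i.
Proof. by move=> [_ pX]; rewrite -bil_ev; apply: pX. Qed.

Lemma psd_zero_diag n (X : 'M[R]_n) i : psd X -> X i i = 0 ->
  forall v, bil X v (ev i) = 0.
Proof.
move=> [sX pX] Xii v; apply/eqP/negP => /negP bn0.
set b := bil X v (ev i) in bn0; set q := bil X v v.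
have := pX (v - ((q + 1) / (2 * b)) *: ev i).
rewrite -/(bil _ _ _) bil_sub // bil_ev Xii -/b -/q mulr0 addr0.
have -> : 2 * ((q + 1) / (2 * b)) * b = q + 1.
  by field.
by rewrite opprD addrA subrr add0r oppr_ge0 ler10.
Qed.

Lemma psd_zero_entry n (X : 'M[R]_n) i j : psd X -> X i i = 0 -> X j i = 0.
Proof. by move=> pX Xii; rewrite -bil_ev (psd_zero_diag pX Xii). Qed.

Lemma psd_zero_entry' n (X : 'M[R]_n) i j : psd X -> X i i = 0 -> X i j = 0.
Proof.
move=> pX Xii; have [sX _] := pX.
by rewrite -[X]sX mxE (psd_zero_entry _ pX Xii).
Qed.


Definition piv n (X : 'M[R]_n) i := X - (X i i)^-1 *: ((row i X)^T *m row i X).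

Lemma bil_piv n (X : 'M[R]_n) i v : symm X ->
  bil (piv X i) v v = bil X v v - (X i i)^-1 * (bil X v (ev i)) ^+ 2.
Proof.
move=> sX.
have h1 : (v *m (row i X)^T) 0 0 = bil X v (ev i).
  by rewrite bil_ev_r tr_row sX colE mulmxA -colE mxE.
have h2 : (row i X *m v^T) 0 0 = bil X v (ev i).
  by rewrite -h1 -[row i X *m v^T]trmxK trmx_mul trmxK mxE.
move: (bil X v (ev i)) h1 h2 => b h1 h2.
rewrite /bil /piv mulmxBr mulmxBl -scalemxAr !mulmxA -!(scalemxAl (X i i)^-1).
have -> : v *m (row i X)^T *m row i X *m v^T = (v *m (row i X)^T) *m (row i X *m v^T) by rewrite !mulmxA.
move: h1 h2; move: (v *m (row i X)^T) (row i X *m v^T) (v *m X *m v^T) => Q S P h1 h2.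
rewrite !mxE big_ord1 h1 h2; ring.
Qed.

Lemma psd_piv n (X : 'M[R]_n) i : psd X -> 0 < X i i -> psd (piv X i).
Proof.
move=> [sX pX] a0; split.
  by rewrite /symm /piv linearB linearZ /= trmx_mul trmxK sX.
move=> v; rewrite -/(bil _ _ _) bil_piv //.
have := pX (v - (bil X v (ev i) / X i i) *: ev i).
rewrite -/(bil _ _ _) bil_sub // bil_ev.
have -> : bil X v v - 2 * (bil X v (ev i) / X i i) * bil X v (ev i) +
  (bil X v (ev i) / X i i) ^+ 2 * X i i = bil X v v - (X i i)^-1 * bil X v (ev i) ^+ 2.
  by field; rewrite gt_eqF.
done.
Qed.

Lemma piv_entry n (X : 'M[R]_n) i j k : (piv X i) j k = X j k - (X i i)^-1 * (X i j * X i k).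
Proof. by rewrite /piv !mxE big_ord1 !mxE. Qed.


Lemma inner_rank1 n (Z : 'M[R]_n) (c : 'rV[R]_n) : inner Z (c^T *m c) = bil Z c c.
Proof.
rewrite /inner /bil mxE.
under [RHS]eq_bigr => j _ do rewrite !mxE big_distrl /=.
rewrite exchange_big /=; apply: eq_bigr => i _; apply: eq_bigr => j _.
rewrite !mxE big_ord1 !mxE; ring.
Qed.

Lemma inner_subZ p q (Z X Y : 'M[R]_(p, q)) d :
  inner Z (X - d *: Y) = inner Z X - d * inner Z Y.
Proof.
rewrite /inner mulr_sumr -sumrB; apply: eq_bigr => i _.
rewrite mulr_sumr -sumrB; apply: eq_bigr => j _.
rewrite !mxE; ring.
Qed.

Lemma inner_psd_aux n (Z : 'M[R]_n) : psd Z -> forall k (X : 'M[R]_n), psd X ->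
  (forall i : 'I_n, (k <= i)%N -> X i i = 0) -> 0 <= inner Z X.
Proof.
move=> pZ; elim=> [|k IH] X pX H.
  have -> : X = 0.
    apply/matrixP => i j; rewrite mxE; apply: psd_zero_entry' pX _; exact: H.
  by rewrite /inner big1 // => i _; rewrite big1 // => j _; rewrite mxE mulr0.
have [kn|nk] := ltnP k n; last first.
  apply: IH pX _ => i ki; have := ltn_ord i; rewrite ltnNge (leq_trans nk ki) //.
pose i0 := Ordinal kn.
have [a0|a0] := eqVneq (X i0 i0) 0.
  apply: IH pX _ => i ki; have [->|] := eqVneq i i0; first by [].
  move=> ne; apply: H; rewrite ltn_neqAle ki andbT; apply: contra ne => /eqP e.
  by apply/eqP/val_inj.
have apos : 0 < X i0 i0 by rewrite lt_neqAle eq_sym a0 psd_diag.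
have -> : X = piv X i0 + (X i0 i0)^-1 *: ((row i0 X)^T *m row i0 X) by rewrite /piv subrK.
rewrite /inner.
under eq_bigr => i _ do under eq_bigr => j _ do rewrite mxE mulrDr.
under eq_bigr => i _ do rewrite big_split /=.
rewrite big_split /= addr_ge0 //.
  apply: IH; first exact: psd_piv.
  move=> i ki; rewrite piv_entry.
  have [->|ne] := eqVneq i i0; first by field; rewrite a0.
  have Xii : X i i = 0 by apply: H; rewrite ltn_neqAle ki andbT; apply: contra ne => /eqP e; apply/eqP/val_inj.
  by rewrite Xii (psd_zero_entry i0 pX Xii) mulr0 mulr0 subr0.
have -> : \sum_i \sum_j Z i j * ((X i0 i0)^-1 *: ((row i0 X)^T *m row i0 X)) i j
   = (X i0 i0)^-1 * inner Z ((row i0 X)^T *m row i0 X).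
  rewrite /inner mulr_sumr; apply: eq_bigr => i _; rewrite mulr_sumr; apply: eq_bigr => j _.
  rewrite mxE; ring.
rewrite inner_rank1 mulr_ge0 //; first by rewrite invr_ge0 ltW.
by case: pZ => _; apply.
Qed.

Lemma inner_psd n (Z X : 'M[R]_n) : psd Z -> psd X -> 0 <= inner Z X.
Proof.
move=> pZ pX; apply: (@inner_psd_aux n Z pZ n X pX) => i ni.
by have := ltn_ord i; rewrite ltnNge ni.
Qed.


Lemma vvT_ge0 n (v : 'rV[R]_n) : 0 <= (v *m v^T) 0 0.
Proof. by rewrite mxE sumr_ge0 // => j _; rewrite mxE -expr2 sqr_ge0. Qed.

Lemma psd_add_scalar n (Z : 'M[R]_n) d : psd Z -> 0 <= d -> psd (Z + d%:M).
Proof.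
move=> [sZ pZ] d0; split.
  by rewrite /symm linearD /= tr_scalar_mx sZ.
move=> v; rewrite mulmxDr mul_mx_scalar mulmxDl -scalemxAl.
move: (pZ v) (vvT_ge0 v); move: (v *m Z *m v^T) (v *m v^T) => P Q h1 h2.
by rewrite !mxE addr_ge0 // mulr_ge0.
Qed.

Lemma inner_addl p q (Z W X : 'M[R]_(p, q)) : inner (Z + W) X = inner Z X + inner W X.
Proof.
rewrite /inner -big_split; apply: eq_bigr => i _; rewrite -big_split; apply: eq_bigr => j _.
by rewrite !mxE mulrDl.
Qed.

Lemma inner_scalel p q (Z X : 'M[R]_(p, q)) c : inner (c *: Z) X = c * inner Z X.
Proof.
rewrite /inner mulr_sumr; apply: eq_bigr => i _; rewrite mulr_sumr; apply: eq_bigr => j _.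
by rewrite !mxE mulrA.
Qed.

Lemma inner_suml p q m (Z : 'I_m -> 'M[R]_(p, q)) (y : 'I_m -> R) X :
  inner (\sum_k y k *: Z k) X = \sum_k y k * inner (Z k) X.
Proof.
elim/big_ind2: _ => //.
- by rewrite /inner big1 // => i _; rewrite big1 // => j _; rewrite mxE mul0r.
- by move=> a1 a2 b1 b2 <- <-; rewrite inner_addl.
- by move=> k _; rewrite inner_scalel.
Qed.

Lemma inner_scalar n (X : 'M[R]_n) c : inner (c%:M) X = c * inner 1%:M X.
Proof.
rewrite /inner mulr_sumr; apply: eq_bigr => i _; rewrite mulr_sumr; apply: eq_bigr => j _.
by rewrite !mxE; case: (i == j); rewrite /= ?mulr1n ?mulr0n; ring.
Qed.

Lemma weak_dual n m (C : 'M[R]_n) (A : 'I_m -> 'M[R]_n) (b : 'I_m -> R) y X c :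
  psd (Lmap C A y + c%:M) -> P_feasible A b X ->
  dotv b y <= inner C X + c * inner 1%:M X.
Proof.
move=> pL [pX bX].
have := inner_psd pL pX.
rewrite inner_addl /Lmap inner_scalar.
have -> : C - \sum_i y i *: A i = C + (-1) *: \sum_i y i *: A i by rewrite scaleN1r.
rewrite inner_addl inner_scalel inner_suml.
have -> : \sum_k y k * inner (A k) X = dotv b y.
  by rewrite /dotv; apply: eq_bigr => k _; rewrite bX mulrC.
move=> h; rewrite -subr_ge0; apply: le_trans h _; rewrite le_eqVlt; apply/orP; left; apply/eqP; ring.
Qed.

End Aux.

Theorem lemma5 (R : realType) (r s m : nat)
  (C : 'M[R]_(r + s)) (A : 'I_m -> 'M[R]_(r + s)) (b : 'I_m -> R) :
  (0 < s)%N ->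
  symm C -> (forall i, symm (A i)) ->
  (exists X, P_feasible A b X) ->
  (exists y, D_feasible C A y) ->
  sing_deg_one C A ->
  (forall y, psd (Lmap C A y) <->
     [/\ ursubmx (Lmap C A y) = 0, drsubmx (Lmap C A y) = 0
       & psd (ulsubmx (Lmap C A y))]) ->
  (exists y, [/\ ursubmx (Lmap C A y) = 0, drsubmx (Lmap C A y) = 0
       & pd (ulsubmx (Lmap C A y))]) ->
  (exists X22 : 'M[R]_s, pd X22 /\
     inner C (block_mx 0 0 0 X22) = 0 /\
     forall i, inner (A i) (block_mx 0 0 0 X22) = 0) ->
  forall M : R, 0 < M ->
  (forall (t : R) (y : 'I_m -> R), 0 <= t ->
     psd (drsubmx (Lmap C A y) + t%:M) ->
     psd ((t * M)%:M - (drsubmx (Lmap C A y) + t%:M))) ->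
  let K := M * (vP C A b - vD C A b + 2) in
  forall alpha : R, 0 < alpha ->
  exists l : R,
    u2 C A b K alpha t @[t --> 0^'+] --> l%:E.
Proof.
move=> _ _ _ [X0 PX0] [y0 Dy0] _ Ha _ _ M M0 _ K alpha a0.
have L0 : forall y, psd (Lmap C A y) -> psd (Lmap C A y + 0%:M).
  by move=> y py; apply: psd_add_scalar.
have wd : forall y X, D_feasible C A y -> P_feasible A b X -> dotv b y <= inner C X.
  move=> y X Dy PX; have := weak_dual (L0 _ Dy) PX; by rewrite mul0r addr0.
have DP : vD C A b <= vP C A b.
  apply: lb_le_inf; first by exists (inner C X0), X0.
  move=> _ [X PX <-]; apply: ge_sup; first by exists (dotv b y0), y0.
  by move=> _ [y Dy <-]; apply: wd.
have K0 : 0 <= K by rewrite /K mulr_ge0 ?(ltW M0) //; lra.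
pose f := fun t => u2 C A b K alpha t.
have feas : forall t y, 0 <= t -> psd (Lmap C A y + (t * alpha)%:M) ->
    dotv b y <= inner C X0 + t * alpha * inner 1%:M X0.
  by move=> t y _ py; apply: weak_dual py PX0.
have mono : forall t1 t2, 0 < t1 -> t1 <= t2 -> (f t1 <= f t2)%E.
  move=> t1 t2 t10 t12; apply: le_ereal_sup => _ [y [py fy] <-]; exists y => //; split => //.
  have -> : Lmap C A y + (t2 * alpha)%:M =
      (Lmap C A y + (t1 * alpha)%:M) + ((t2 - t1) * alpha)%:M.
    move: (Lmap C A y) => LL.
    rewrite -addrA; congr (_ + _).
    apply/matrixP => i j; rewrite !mxE.
    by case: (i == j); rewrite /= ?mulr1n ?mulr0n ?addr0 //; ring.
  by apply: psd_add_scalar => //; rewrite mulr_ge0 ?subr_ge0 // ltW.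
have HE := @nondecreasing_at_right_cvge R f 0 (BLeft 1).
have : (BRight (0:R) < BLeft 1)%O by rewrite bnd_simp.
move=> /HE {}HE.
have : {in Interval (BRight 0) (BLeft 1) &, nondecreasing_fun f}.
  move=> x y; rewrite !in_itv /= => /andP[x0 _] /andP[y0' _] xy; exact: mono.
move=> /HE {}HE.
move: HE; set E := ereal_inf _ => HE.
have lo : ((dotv b y0)%:E <= E)%E.
  apply: le_ereal_inf_tmp => z [t]; rewrite /= in_itv /= => /andP[t0 _] <-.
  apply: ereal_sup_ubound; exists y0 => //; split.
    by apply: psd_add_scalar => //; rewrite mulr_ge0 // ltW.
  have [-> _ _] := (Ha y0).1 Dy0.
  rewrite /frob2 /inner big1; first by rewrite mulr_ge0 // ltW.
  move=> i _; rewrite big1 // => j _.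
  by rewrite mxE mul0r.
have up : (E <= (inner C X0 + 2^-1 * alpha * inner 1%:M X0)%:E)%E.
  apply: (@le_trans _ _ (f 2^-1)).
    by apply: ereal_inf_lbound; exists 2^-1 => //; rewrite /= in_itv /=; apply/andP; split; lra.
  apply: ge_ereal_sup => _ [y [py _] <-]; rewrite lee_fin; apply: feas py; lra.
move: E lo up HE => [x| |] lo up HE.
- by exists x.
- by [].
- by [].
Qed.
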